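(* Let $K_1,\dots,K_N$ be kernels on $X\times X$, let $k\le N$, and let $\mathcal{K}=\{\sum_{i=1}^N w_iK_i:\ \sum_{i=1}^N w_i=1\ \text{and}\ \sum_{i=1}^N[w_i\neq 0]\le k\}$. Then \[ d_\phi(\mathcal{K})\leq 2k\log(k)+2k\log(4eN). \]
   Context: $[w_i\ne 0]$ is $1$ if $w_i\neq0$ and $0$ otherwise. For a class $\mathcal{K}$ of real functions on $X\times X$: $\mathcal{K}$ pseudo-shatters pairs $(x_1,x_1'),\dots,(x_r,x_r')$ if there exist thresholds $t_1,\dots,t_r$ such that for every $b\in\{-1,+1\}^r$ there is $K\in\mathcal{K}$ with $\mathrm{sign}(K(x_i,x_i')-t_i)=b_i$ for all $i$; the pseudodimension $d_\phi(\mathcal{K})$ is the largest $r$ such that some set of $r$ pairs is pseudo-shattered by $\mathcal{K}$. *)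

(* Defs.v *)
From Stdlib Require Import Reals List.
Import ListNotations.
Open Scope R_scope.

Definition rsum (N : nat) (f : nat -> R) : R :=
  fold_right Rplus 0 (map f (seq 0 N)).

Definition support_size (N : nat) (w : nat -> R) : nat :=
  length (filter (fun i => if Req_EM_T (w i) 0 then false else true) (seq 0 N)).

Definition kcomb {X : Type} (N : nat) (Ks : nat -> X -> X -> R) (w : nat -> R)
  : X -> X -> R :=
  fun x y => rsum N (fun i => w i * Ks i x y).

Definition sparse_class {X : Type} (N k : nat) (Ks : nat -> X -> X -> R)
  (K : X -> X -> R) : Prop :=
  exists w : nat -> R,
    rsum N w = 1 /\ (support_size N w <= k)%nat /\ K = kcomb N Ks w.

(* sign(z) = b for b in {-1,+1}, encoded by a bool (true = +1, false = -1) *)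
Definition sign_is (z : R) (b : bool) : Prop :=
  if b then 0 < z else z < 0.

Definition pseudo_shatters {X : Type} (C : (X -> X -> R) -> Prop)
  (r : nat) (pts : nat -> X * X) : Prop :=
  exists t : nat -> R,
    forall b : nat -> bool,
      exists K, C K /\
        forall i, (i < r)%nat -> sign_is (K (fst (pts i)) (snd (pts i)) - t i) (b i).

(* Main.v *)
Require Import Defs.
From Stdlib Require Import Reals List Lra Lia.
Open Scope R_scope.

Lemma fold_filter (f : nat -> R) (pb : nat -> bool) (l : list nat) :
  (forall j, pb j = false -> f j = 0) ->
  fold_right Rplus 0 (map f l) = fold_right Rplus 0 (map f (filter pb l)).
Proof.
  intros H; induction l as [|a l IH]; simpl; auto.
  destruct (pb a) eqn:E; simpl; rewrite IH; auto.
  rewrite (H a E); ring.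
Qed.

Lemma filter_bound (pb : nat -> bool) (N x : nat) :
  In x (filter pb (seq 0 N)) -> (x < N)%nat.
Proof.
  intros H; apply filter_In in H; destruct H as [H _]; apply in_seq in H; lia.
Qed.

Lemma nth_bound (s : list nat) (N : nat) :
  (forall x, In x s -> (x < N)%nat) ->
  forall l, (l < length s)%nat -> (nth l s 0 < N)%nat.
Proof.
  intros H l Hl; apply H; apply nth_In; exact Hl.
Qed.

From HB Require Import structures.
From mathcomp Require all_boot all_order all_algebra boolp ring lra Rstruct.

Module Geo.
Import all_boot all_order all_algebra boolp ring lra Rstruct.
Set Implicit Arguments. Unset Strict Implicit. Unset Printing Implicit Defensive.
Import Order.TTheory GRing.Theory Num.Theory.
Local Open Scope ring_scope.

Section Geo.
Variable F : realFieldType.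

Definition sgn (z : F) (b : bool) : bool := if b then 0 < z else z < 0.

Definition realized n m (U : 'M[F]_(m,n)) (p : 'rV[F]_n) q (idx : q.-tuple 'I_n)
  (b : q.-tuple bool) : Prop :=
  exists v : 'rV[F]_n, (v <= U)%MS /\ forall i : 'I_q, sgn ((p + v) 0 (tnth idx i)) (tnth b i).

Definition patset n m (U : 'M[F]_(m,n)) (p : 'rV[F]_n) q (idx : q.-tuple 'I_n)
  : {set q.-tuple bool} := [set b | `[< realized U p idx b >]].

Lemma subv_sub m1 m2 n (A B : 'M[F]_(m1,n)) (C : 'M[F]_(m2,n)) :
  (A <= C)%MS -> (B <= C)%MS -> (A - B <= C)%MS.
Proof. by move=> hA hB; apply: addmx_sub => //; rewrite -scaleN1r scalemx_sub. Qed.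

Lemma sgn_conv (y1 y2 l : F) s : 0 < l -> l < 1 -> sgn y1 s -> sgn y2 s ->
  sgn (y1 + l * (y2 - y1)) s.
Proof.
move=> l0 l1; case: s => /= h1 h2.
  have -> : y1 + l * (y2 - y1) = (1 - l) * y1 + l * y2 by ring.
  by apply: addr_gt0; apply: mulr_gt0 => //; rewrite subr_gt0.
have -> : y1 + l * (y2 - y1) = - ((1 - l) * (- y1) + l * (- y2)) by ring.
rewrite oppr_lt0; apply: addr_gt0; apply: mulr_gt0 => //; rewrite ?subr_gt0 ?oppr_gt0 //.
Qed.

Lemma realized_cons n m (U : 'M[F]_(m,n)) p q j (idx : q.-tuple 'I_n) (s : bool) (b : q.-tuple bool) :
  realized U p [tuple of j :: idx] [tuple of s :: b] <->
  exists v : 'rV[F]_n, (v <= U)%MS /\ sgn ((p + v) 0 j) s /\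
     forall i : 'I_q, sgn ((p + v) 0 (tnth idx i)) (tnth b i).
Proof.
split=> [[v [hv hi]]|[v [hv [hj hi]]]].
  exists v; split => //; split; first by have := hi ord0; rewrite !tnth0.
  by move=> i; have := hi (lift ord0 i); rewrite !tnthS.
exists v; split => // i; case: (unliftP ord0 i) => [i'|] ->.
  by rewrite !tnthS. by rewrite !tnth0.
Qed.

Lemma leq_expb (a b e : nat) : (a <= b)%N -> (a ^ e <= b ^ e)%N.
Proof. by move=> h; elim: e => // e IH; rewrite !expnS leq_mul. Qed.

Lemma geo n q (idx : q.-tuple 'I_n) :
  forall m (U : 'M[F]_(m,n)) p, (#|patset U p idx| <= q.+1 ^ (\rank U))%N.
Proof.
elim: q idx => [|q IH] idx m U p.
  rewrite exp1n; apply: leq_trans (max_card _) _.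
  by rewrite card_tuple.
case/tupleP: idx => j idx.
set P := patset _ _ _.
set T' := [set b : q.-tuple bool | [tuple of true :: b] \in P].
set F' := [set b : q.-tuple bool | [tuple of false :: b] \in P].
have hP : (#|P| <= #|T'| + #|F'|)%N.
  have sub : P \subset (fun b : q.-tuple bool => [tuple of true :: b]) @: T' :|: (fun b : q.-tuple bool => [tuple of false :: b]) @: F'.
    apply/subsetP => b; case/tupleP: b => s b hb; rewrite inE.
    case: s hb => hb; apply/orP; [left|right]; apply/imsetP; exists b => //;
      by rewrite inE.
  apply: leq_trans (subset_leq_card sub) _.
  apply: leq_trans (leq_card_setU _ _) _.
  by apply: leq_add; apply: leq_imset_card.
rewrite -cardsUI in hP.
have hU : T' :|: F' \subset patset U p idx.
  apply/subsetP => b; rewrite !inE => /orP[] /asboolP /realized_cons [v [hv [_ hi]]];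
   by apply/asboolP; exists v.
have h1 := IH idx m U p.
have h1' : (#|T' :|: F'| <= q.+1 ^ \rank U)%N := leq_trans (subset_leq_card hU) h1.
case: (set_0Vmem (T' :&: F')) => [e|[b0 hb0]].
  rewrite e cards0 addn0 in hP; apply: (leq_trans hP); apply: (leq_trans h1').
  exact: leq_expb.
set H : 'M[F]_n := kermx (delta_mx j (0 : 'I_1)).
have memH : forall v : 'rV[F]_n, (v <= H)%MS = (v 0 j == 0).
  move=> v; rewrite sub_kermx -colE; apply/eqP/eqP => [h|h].
    by have := congr1 (fun M : 'M[F]_(1,1) => M 0 0) h; rewrite !mxE.
  by apply/matrixP => a c; rewrite !mxE !ord1.
have onH : forall b, b \in T' :&: F' -> exists v : 'rV[F]_n,
    (v <= U)%MS /\ (p + v) 0 j = 0 /\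
    (forall i : 'I_q, sgn ((p + v) 0 (tnth idx i)) (tnth b i)) /\
    exists v1 v2 : 'rV[F]_n, (v1 <= U)%MS /\ (v2 <= U)%MS /\ v1 0 j != v2 0 j.
  move=> b; rewrite !inE => /andP[/asboolP/realized_cons [v1 [hv1 [hj1 hi1]]]
                                  /asboolP/realized_cons [v2 [hv2 [hj2 hi2]]]].
  move: hj1 hj2; rewrite /sgn => hj1 hj2.
  set a := (p + v1) 0 j in hj1; set c := (p + v2) 0 j in hj2.
  have ac : 0 < a - c by rewrite subr_gt0 (lt_trans hj2 hj1).
  set l := a / (a - c).
  have l0 : 0 < l by rewrite divr_gt0.
  have l1 : l < 1 by rewrite ltr_pdivrMr // mul1r; lra.
  exists (v1 + l *: (v2 - v1)); split.
    by apply: addmx_sub => //; apply: scalemx_sub; apply: subv_sub.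
  have E : forall i, (p + (v1 + l *: (v2 - v1))) 0 i =
          (p + v1) 0 i + l * ((p + v2) 0 i - (p + v1) 0 i).
    by move=> i; rewrite !mxE; ring.
  split; first by rewrite E -/a -/c /l; field; rewrite lt0r_neq0.
  split; first by move=> i; rewrite E; apply: sgn_conv.
  exists v1, v2; split => //; split => //.
  apply/eqP => e; move: hj1 hj2; rewrite /a /c !mxE e => g1 g2.
  by have := lt_trans g1 g2; rewrite ltxx.
have [v0 [hv0 [hj0 [_ [v1 [v2 [hv1 [hv2 hne]]]]]]]] := onH b0 hb0.
have hI : T' :&: F' \subset patset (U :&: H)%MS (p + v0) idx.
  apply/subsetP => b hb; have [v [hv [hj [hi _]]]] := onH b hb.
  rewrite inE; apply/asboolP; exists (v - v0); split.
    rewrite sub_capmx (subv_sub hv hv0) memH /=.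
    by move: hj hj0; rewrite !mxE => hj hj0; apply/eqP; lra.
  move=> i; have := hi i; congr (sgn _ _); rewrite !mxE; ring.
have h2 := leq_trans (subset_leq_card hI) (IH idx _ (U :&: H)%MS (p + v0)).
have hlt : (\rank (U :&: H)%MS < \rank U)%N.
  apply: rank_ltmx; rewrite ltmxE capmxSl /=; apply/negP => hsub.
  have : (v1 - v2 <= H)%MS.
    apply: submx_trans (capmxSr U H); apply: submx_trans hsub.
    exact: subv_sub.
  rewrite memH !mxE subr_eq0; exact/negP.
apply: (leq_trans hP).
move: hlt h1' h2; case: (\rank U) => // d hlt h1' h2.
have h3 : (q.+1 ^ \rank (U :&: H)%MS <= q.+1 ^ d)%N by rewrite ltnS in hlt; exact: (leq_pexp2l (ltn0Sn q) hlt).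
have h4 : (q.+1 ^ d <= q.+2 ^ d)%N by apply: leq_expb.
move: h1' h2; rewrite !expnS => h1' h2.
have := leq_add h1' (leq_trans h2 h3).
move=> h5; apply: (leq_trans h5).
apply: leq_trans (leq_mul (leqnn q.+2) h4).
by rewrite [(q.+2 * _)%N]mulSn addnC.
Qed.

End Geo.

Lemma length_size (T : Type) (l : list T) : List.length l = size l.
Proof. by elim: l => //= a l ->. Qed.

Lemma nth_List (s : list nat) l : nth 0%N s l = List.nth l s 0%N.
Proof. by elim: s l => [|a s IH] [|l] //=. Qed.

Lemma fold_big (f : nat -> R) (s : list nat) :
  List.fold_right Rplus 0%R (List.map f s) = \sum_(x <- s) f x.
Proof. elim: s => [|a s IH] /=; first by rewrite big_nil. by rewrite big_cons IH. Qed.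

Lemma sign_sgn (z : R) (b : bool) : sign_is z b -> sgn z b.
Proof. by case: b => /= /RltP. Qed.

Lemma INR_expn (a e : nat) : INR (a ^ e) = pow (INR a) e.
Proof. elim: e => [|e IH] //=. by rewrite expnS -IH -mult_INR. Qed.

Lemma card_bigcup_le (I T : finType) (A : I -> {set T}) :
  (#|\bigcup_i A i| <= \sum_i #|A i|)%N.
Proof.
elim/big_rec2: _ => [|i n S _ IH]; first by rewrite cards0.
rewrite cardsU; apply: leq_trans (leq_subr _ _) _.
by rewrite leq_add2l.
Qed.

Lemma counting (X : Type) (N' k : nat) (Ks : nat -> X -> X -> R) (r : nat)
  (pts : nat -> X * X) :
  pseudo_shatters (sparse_class N'.+1 k Ks) r pts ->
  (2 ^ r <= N'.+1 ^ k * r.+1 ^ k)%N.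
Proof.
case=> t Ht.
pose U := fun g : {ffun 'I_k -> 'I_N'.+1} =>
  (\matrix_(l < k, i < r) Ks (g l) (pts i).1 (pts i).2 : 'M[R]_(k, r)).
pose p : 'rV[R]_r := \row_i (- t i).
have cover : [set: r.-tuple bool] \subset
    \bigcup_(g : {ffun 'I_k -> 'I_N'.+1}) patset (U g) p (ord_tuple r).
  apply/subsetP => bt _.
  have [K [[w [hsum [hsupp ->]]] hsign]] := Ht (fun i => nth false bt i).
  move: hsupp; rewrite /support_size.
  set s := List.filter _ _ => hsupp.
  have sk : (size s <= k)%N by move: hsupp; rewrite length_size => /ssrnat.leP.
  have sb : forall l, (l < size s)%N -> (nth 0%N s l < N'.+1)%N.
    move=> l hl; apply/ssrnat.ltP; rewrite nth_List; apply: nth_bound.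
      by move=> x; apply: filter_bound.
    by rewrite length_size; apply/ssrnat.ltP.
  pose g := [ffun l : 'I_k => (inord (nth 0%N s l) : 'I_N'.+1)].
  apply/bigcupP; exists g => //.
  rewrite inE; apply/asboolP.
  exists (\row_(l < k) (if (l < size s)%N then w (nth 0%N s l) else 0) *m U g);
    split; first exact: submxMl.
  move=> i; rewrite tnth_ord_tuple (tnth_nth false).
  have := hsign i (ssrnat.ltP (ltn_ord i)); move/sign_sgn.
  congr (sgn _ _).
  rewrite !mxE addrC; congr (_ + _).
  rewrite /kcomb /rsum.
  have E : forall f : nat -> R, (forall j, w j = 0 -> f j = 0) ->
      List.fold_right Rplus 0%R (List.map f (List.seq 0 N'.+1)) =
      List.fold_right Rplus 0%R (List.map f s).
    move=> f hf; rewrite /s; apply: fold_filter => j.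
    by case: Stdlib.Reals.RIneq.Req_EM_T => // /hf.
  rewrite E; last by move=> j ->; rewrite Rmult_0_l.
  rewrite fold_big (big_nth 0%N) big_mkord.
  rewrite (big_ord_widen k (fun j => w (nth 0%N s j) * Ks (nth 0%N s j) (pts i).1 (pts i).2) sk) big_mkcond /=.
  apply: eq_bigr => l _; rewrite !mxE; case: ifP => h; last by rewrite mul0r.
  by rewrite ffunE inordK ?sb.
have h2 : (#|[set: r.-tuple bool]| = 2 ^ r)%N by rewrite cardsT card_tuple card_bool.
rewrite -h2.
apply: leq_trans (subset_leq_card cover) _.
apply: (leq_trans (card_bigcup_le (fun g : {ffun 'I_k -> 'I_N'.+1} => patset (U g) p (ord_tuple r)))).
have hb : forall g, (#|patset (U g) p (ord_tuple r)| <= r.+1 ^ k)%N.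
  move=> g; apply: leq_trans (geo _ _ _) _; apply: leq_pexp2l => //; exact: rank_leq_row.

apply: leq_trans (@leq_sum _ _ xpredT (fun g => #|patset (U g) p (ord_tuple r)|) (fun _ => r.+1 ^ k)%N (fun g _ => hb g)) _.
by rewrite sum_nat_const card_ffun !card_ord.
Qed.

End Geo.

Lemma exp_pow (x : R) (n : nat) : exp x ^ n = exp (INR n * x).
Proof.
  induction n as [|n IH].
  - simpl. rewrite Rmult_0_l, exp_0. reflexivity.
  - rewrite S_INR, <- tech_pow_Rmult, IH, <- exp_plus. f_equal. ring.
Qed.

Lemma ln2_ge : 5/8 <= ln 2.
Proof.
  assert (Hy : exp (5/8) <= 2).
  { destruct (Rle_lt_dec (exp (5/8)) 2) as [h|h]; auto.
    assert (H1 : 2 ^ 8 <= exp (5/8) ^ 8) by (apply pow_incr; lra).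
    rewrite exp_pow in H1.
    replace (INR 8 * (5/8)) with (INR 5 * 1) in H1 by (simpl; lra).
    rewrite <- exp_pow in H1.
    assert (H2 : exp 1 ^ 5 <= 3 ^ 5).
    { apply pow_incr; split; [left; apply exp_pos | apply exp_le_3]. }
    simpl in H1, H2. lra. }
  rewrite <- (ln_exp (5/8)).
  destruct (Rle_lt_or_eq_dec _ _ Hy) as [h|h].
  - left; apply ln_increasing; [apply exp_pos | exact h].
  - rewrite h; right; reflexivity.
Qed.

Lemma ln_le' (x y : R) : 0 < x -> x <= y -> ln x <= ln y.
Proof.
  intros hx hxy; destruct (Rle_lt_or_eq_dec _ _ hxy) as [h|h].
  - left; apply ln_increasing; auto.
  - subst; right; reflexivity.
Qed.

Lemma ln_le_sub1 (y : R) : 0 < y -> ln y <= y - 1.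
Proof.
  intros hy; pose proof (exp_ineq1_le (ln y)) as h; rewrite exp_ln in h; lra.
Qed.

Lemma INR_ge1 (n : nat) : (1 <= n)%nat -> 1 <= INR n.
Proof. intros h; apply (le_INR 1 n) in h; simpl in h; exact h. Qed.

Theorem lemma4 (X : Type) (N k : nat) (Ks : nat -> X -> X -> R)
  (hk : (k <= N)%nat) :
  forall (r : nat) (pts : nat -> X * X),
    pseudo_shatters (sparse_class N k Ks) r pts ->
    INR r <= 2 * INR k * ln (INR k) + 2 * INR k * ln (4 * exp 1 * INR N).
Proof.
  intros r pts Hs.
  destruct N as [|N'].
  { destruct Hs as [t Ht]. destruct (Ht (fun _ => true)) as [K [[w [hsum _]] _]].
    unfold rsum in hsum; simpl in hsum. lra. }
  pose proof (Geo.counting Hs) as Hc.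
  apply (proj2 (Bool.reflect_iff _ _ (@ssrnat.leP _ _))) in Hc.
  apply le_INR in Hc.
  rewrite ssrnat.mulnE, mult_INR, !Geo.INR_expn in Hc.
  replace (INR 2) with 2 in Hc by (simpl; lra).
  destruct k as [|k'].
  { simpl in Hc.
    assert (Hr : r = 0%nat).
    { destruct r as [|r']; auto. simpl in Hc.
      assert (h : 1 <= 2 ^ r') by (apply pow_R1_Rle; lra). lra. }
    subst r. simpl. lra. }
  set (kk := INR (S k')) in *.
  set (n := INR (S N')) in *.
  set (x := INR r) in *.
  assert (hkk : 1 <= kk) by (apply INR_ge1; lia).
  assert (hn : 1 <= n) by (apply INR_ge1; lia).
  assert (hx : 0 <= x) by apply pos_INR.
  replace (INR (S r)) with (x + 1) in Hc by (unfold x; rewrite S_INR; reflexivity).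
  apply ln_le' in Hc; [|apply pow_lt; lra].
  rewrite ln_mult, !ln_pow in Hc; try (apply pow_lt); try lra.
  fold x kk in Hc.
  pose proof ln2_ge as HL.
  set (L := ln 2) in *.
  assert (HA : 0 <= ln n) by (rewrite <- ln_1; apply ln_le'; lra).
  assert (HB : 0 <= ln kk) by (rewrite <- ln_1; apply ln_le'; lra).
  assert (Hlnx : ln (x + 1) <= (x + 1) / (8 * kk) + 3 * L + ln kk - 1).
  { assert (h := ln_le_sub1 ((x + 1) / (8 * kk))).
    assert (hp : 0 < (x + 1) / (8 * kk)) by (apply Rdiv_lt_0_compat; lra).
    specialize (h hp).
    unfold Rdiv in h. rewrite ln_mult in h; [|lra|apply Rinv_0_lt_compat; lra].
    rewrite ln_Rinv, ln_mult in h; try lra.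
    assert (h8 : ln 8 = 3 * L).
    { replace 8 with (2 * 2 * 2) by lra. rewrite !ln_mult; try lra. fold L; ring. }
    rewrite h8 in h. unfold Rdiv. lra. }
  assert (H4 : ln (4 * exp 1 * n) = 2 * L + 1 + ln n).
  { rewrite !ln_mult; try lra; try apply exp_pos.
    - rewrite ln_exp. replace 4 with (2 * 2) by lra. rewrite ln_mult; try lra. fold L; ring.
    - apply Rmult_lt_0_compat; [lra | apply exp_pos]. }
  rewrite H4.
  set (A := ln n) in *. set (B := ln kk) in *.
  assert (Hk1 : kk * ln (x + 1) <= (x + 1) / 8 + kk * (3 * L + B - 1)).
  { replace ((x + 1) / 8) with (kk * ((x + 1) / (8 * kk))) by (field; lra).
    rewrite <- Rmult_plus_distr_l.
    apply Rmult_le_compat_l; lra. }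
  assert (Hlin : x * (L - 1/8) <= kk * A + 1/8 + kk * (3 * L + B - 1)) by lra.
  apply (Rmult_le_reg_r (L - 1/8)); [lra|].
  apply (Rle_trans _ _ _ Hlin).
  assert (h1 : 0 <= kk * B * (2 * L - 5/4)) by (apply Rmult_le_pos; [apply Rmult_le_pos|]; lra).
  assert (h2 : 0 <= kk * A * (2 * L - 5/4)) by (apply Rmult_le_pos; [apply Rmult_le_pos|]; lra).
  assert (h3 : 0 <= (kk - 1) * (4 * L * L - 3/2 * L + 3/4)) by (apply Rmult_le_pos; nra).
  nra.
Qed.
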